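(* Let $\mathcal{G}=\{G_1,\dots,G_M\}$ be groups with $G_i\subseteq[p]$ and $\bigcup_i G_i=[p]$. Let $\vec g\in\mathbb{R}^p$, let $\tilde k$ and $k$ be positive integers, let $\hat{\vec u}$ be the output of the Greedy Projection algorithm applied to $\vec g$ with target group sparsity $\tilde k$, and let $\vec u_*=P_k^{\mathcal{G}}(\vec g)$. Then \[ \|\hat{\vec u}-\vec g\|_2^2\le e^{-\tilde k/k}\,\|\vec g_{\operatorname{supp}(\vec u_* )}\|_2^2+\|\vec u_*-\vec g\|_2^2 , \] where $e$ is the base of the natural logarithm.
   Context: For $\vec w\in\mathbb{R}^p$ and $S\subseteq[p]$, $\vec w_S$ is the vector that agrees with $\vec w$ on $S$ and is $0$ outside $S$. The group-$\ell_0$ pseudo-norm $\|\vec w\|_0^{\mathcal{G}}$ is the minimum, over all decompositions $\vec w=\sum_{i=1}^M \vec a_{G_i}$ with $\operatorname{supp}(\vec a_{G_i})\subseteq G_i$, of the number of indices $i$ with $\vec a_{G_i}\neq 0$. The exact projection is $P_k^{\mathcal{G}}(\vec g)=\arg\min_{\vec w}\|\vec w-\vec g\|_2^2$ subject to $\|\vec w\|_0^{\mathcal{G}}\le k$. The Greedy Projection algorithm with input $\vec g$ and parameter $\tilde k$: set $\vec u=0$, $\vec v=\vec g$, $\widehat{\mathcal{G}}=\emptyset$; for $t=1,\dots,\tilde k$: choose $G^\star=\arg\max_{G\in\mathcal{G}\setminus\widehat{\mathcal{G}}}\|\vec v_G\|_2$, set $\widehat{\mathcal{G}}=\widehat{\mathcal{G}}\cup\{G^\star\}$,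 $\vec u=\vec u+\vec v_{G^\star}$, $\vec v=\vec v-\vec v_{G^\star}$; output $\hat{\vec u}=\vec u$ (so $\hat{\vec u}$ equals $\vec g$ on the union of the selected groups and $0$ elsewhere). *)

(* Defs.v *)
From HB Require Import structures.
From mathcomp Require Import all_boot all_order all_algebra.
From mathcomp Require Import reals sequences exp.
Set Implicit Arguments. Unset Strict Implicit. Unset Printing Implicit Defensive.
Import Order.TTheory GRing.Theory Num.Theory.
Local Open Scope ring_scope.

Definition sqnorm (R : realType) (p : nat) (w : 'I_p -> R) : R :=
  \sum_(j < p) w j ^+ 2.

Definition restr (R : realType) (p : nat) (S : {set 'I_p}) (w : 'I_p -> R)
  : 'I_p -> R := fun j => if j \in S then w j else 0.

Definition supp (R : realType) (p : nat) (w : 'I_p -> R) : {set 'I_p} :=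
  [set j | w j != 0].

(* ||w||_0^G <= k : there is a decomposition w = sum_i a_{G_i},
   supp a_{G_i} ⊆ G_i, with at most k nonzero parts. *)
Definition group_l0_le (R : realType) (p M : nat) (G : 'I_M -> {set 'I_p})
  (w : 'I_p -> R) (k : nat) : Prop :=
  exists a : 'I_M -> 'I_p -> R,
    (forall i j, j \notin G i -> a i j = 0) /\
    (forall j, w j = \sum_(i < M) a i j) /\
    (#|[set i | [exists j, a i j != 0%R]]| <= k)%N.

Definition is_group_proj (R : realType) (p M : nat) (G : 'I_M -> {set 'I_p})
  (k : nat) (g u : 'I_p -> R) : Prop :=
  group_l0_le G u k /\
  forall w, group_l0_le G w k ->
    sqnorm (fun j => u j - g j) <= sqnorm (fun j => w j - g j).

Definition greedy_step (R : realType) (p M : nat) (G : 'I_M -> {set 'I_p})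
  (st : ('I_p -> R) * ('I_p -> R)) (i : 'I_M) :=
  let: (u, v) := st in
  (fun j => u j + restr (G i) v j, fun j => v j - restr (G i) v j).

Definition greedy_state (R : realType) (p M : nat) (G : 'I_M -> {set 'I_p})
  (g : 'I_p -> R) (s : seq 'I_M) : ('I_p -> R) * ('I_p -> R) :=
  foldl (greedy_step G) (fun _ => 0, g) s.

(* s is a valid run of Greedy Projection with parameter kt (any tie-breaking):
   at each step t the chosen group maximizes ||v_G||_2 among the groups not yet
   selected. The run has min(kt, M) steps (the algorithm cannot continue once
   all groups are selected). *)
Definition greedy_run (R : realType) (p M : nat) (G : 'I_M -> {set 'I_p})
  (g : 'I_p -> R) (kt : nat) (s : seq 'I_M) : Prop :=
  size s = minn kt M /\ uniq s /\
  forall t, (t < size s)%N ->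
    let v := (greedy_state G g (take t s)).2 in
    forall i : 'I_M, i \notin take t s ->
      Num.sqrt (sqnorm (restr (G i) v))
        <= Num.sqrt (sqnorm (restr (G (nth i s t)) v)).

Definition greedy_output (R : realType) (p M : nat) (G : 'I_M -> {set 'I_p})
  (g : 'I_p -> R) (s : seq 'I_M) : 'I_p -> R :=
  (greedy_state G g s).1.

(* Main.v *)
Require Import Defs.
From HB Require Import structures.
From mathcomp Require Import all_boot all_order all_algebra.
From mathcomp Require Import reals sequences exp.
From mathcomp Require Import ring lra.
Import Order.TTheory GRing.Theory Num.Theory.
Local Open Scope ring_scope.

Section Aux.
Variables (R : realType) (p M : nat) (G : 'I_M -> {set 'I_p}) (g : 'I_p -> R).

Lemma gs_rcons r i :
  greedy_state G g (rcons r i) = greedy_step G (greedy_state G g r) i.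
Proof. by rewrite /greedy_state foldl_rcons. Qed.

Lemma gs_inv r :
  (forall j, (greedy_state G g r).1 j + (greedy_state G g r).2 j = g j) /\
  (forall j, (greedy_state G g r).2 j ^+ 2 <= g j ^+ 2) /\
  (forall i j, i \in r -> j \in G i -> (greedy_state G g r).2 j = 0).
Proof.
elim/last_ind: r => [|r i IH].
  split; first by move=> j /=; rewrite add0r.
  by split.
rewrite gs_rcons /greedy_step.
case: (greedy_state G g r) IH => u v /= [IH1 [IH2 IH3]].
split; [|split].
- move=> j; rewrite -(IH1 j) /restr; case: ifP => _; ring.
- move=> j; rewrite /restr; case: ifP => _.
    by rewrite subrr expr2 mul0r sqr_ge0.
  by rewrite subr0.
- move=> i' j; rewrite mem_rcons inE => /orP [/eqP -> | Hi] Hj; rewrite /restr.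
    by rewrite Hj subrr.
  by rewrite (IH3 i' j Hi Hj); case: ifP => _; rewrite ?subrr ?subr0.
Qed.

Lemma sq_step (v : 'I_p -> R) (A : {set 'I_p}) :
  sqnorm (fun j => v j - restr A v j) = sqnorm v - sqnorm (restr A v).
Proof.
rewrite /sqnorm -sumrB; apply: eq_bigr => j _; rewrite /restr.
by case: ifP => _; ring.
Qed.

Lemma sq_split (v : 'I_p -> R) (A : {set 'I_p}) :
  sqnorm v = sqnorm (restr A v) + sqnorm (restr (~: A) v).
Proof.
rewrite /sqnorm -big_split; apply: eq_bigr => j _; rewrite /restr inE.
by case: (j \in A) => /=; ring.
Qed.

Lemma sq_ge0 (v : 'I_p -> R) : 0 <= sqnorm v.
Proof. by apply: sumr_ge0 => j _; apply: sqr_ge0. Qed.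

End Aux.
Arguments gs_inv {R p M} G g r.
Arguments sq_step {R p} v A.
Arguments sq_split {R p} v A.
Arguments sq_ge0 {R p} v.
Arguments gs_rcons {R p M} G g r i.

Theorem lemma1 (R : realType) (p M : nat) (G : 'I_M -> {set 'I_p})
  (g : 'I_p -> R) (kt k : nat) (s : seq 'I_M) (ustar : 'I_p -> R) :
  \bigcup_(i < M) G i = [set: 'I_p] ->
  (0 < kt)%N -> (0 < k)%N ->
  greedy_run G g kt s ->
  is_group_proj G k g ustar ->
  sqnorm (fun j => greedy_output G g s j - g j)
    <= expR (- (kt%:R / k%:R)) * sqnorm (restr (supp ustar) g)
       + sqnorm (fun j => ustar j - g j).
Proof.
move=> Hcov Hkt Hk [Hsize [Huniq Hgr]] [[a [Ha0 [Hsum Hcard]]] _].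
set S := supp ustar.
set K := [set i | [exists j, a i j != 0]].
set A := sqnorm (restr S g).
set C := sqnorm (restr (~: S) g).
set n := size s.
set v := fun t => (greedy_state G g (take t s)).2.
have cov : forall j, j \in S -> exists2 i, i \in K & j \in G i.
  move=> j; rewrite inE => Hj.
  have : [exists i, a i j != 0].
    case: (boolP [exists i, a i j != 0]) => //; rewrite negb_exists => /forallP H.
    suff : ustar j = 0 by move=> E; rewrite E eqxx in Hj.
    rewrite Hsum big1 // => i _.
    by move: (H i); rewrite negbK => /eqP.
  case/existsP => i Hi; exists i.
    by rewrite inE; apply/existsP; exists j.
  by apply/negPn/negP => Hn; rewrite Ha0 ?eqxx in Hi.
have HrK : forall w : 'I_p -> R,
    sqnorm (restr S w) <= \sum_(i in K) sqnorm (restr (G i) w).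
  move=> w; rewrite /sqnorm exchange_big /=; apply: ler_sum => j _.
  rewrite {1}/restr; case jS: (j \in S).
    have [i iK jG] := cov j jS.
    rewrite (bigD1 i) //= {1}/restr jG lerDl.
    by apply: sumr_ge0 => i' _; apply: sqr_ge0.
  by rewrite expr2 mul0r; apply: sumr_ge0 => i' _; apply: sqr_ge0.
have hk : (0 : R) < k%:R by rewrite ltr0n.
set c : R := 1 - k%:R^-1.
have hc : 0 <= c.
  rewrite /c subr_ge0 invr_le1 ?unitfE ?pnatr_eq0 -?lt0n // ?ler1n //.
have HA : 0 <= A by apply: sq_ge0.
have HD : forall t, (t <= n)%N -> sqnorm (v t) - C <= c ^+ t * A.
  elim => [_|t IH Ht].
    rewrite /v take0 /= expr0 mul1r /C /A (sq_split g S); lra.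
  have Ht' : (t < n)%N by [].
  have [x0 _] : exists x0 : 'I_M, true.
    by move: Ht'; rewrite /n; case: (s) => [|x ?] //; exists x.
  set istar := nth x0 s t.
  have Hv1 : v t.+1 = fun j => v t j - restr (G istar) (v t) j.
    by rewrite /v (take_nth x0 Ht') gs_rcons /greedy_step; case: greedy_state.
  set m := sqnorm (restr (G istar) (v t)).
  have Hm0 : 0 <= m by apply: sq_ge0.
  have Hq1 : sqnorm (v t.+1) = sqnorm (v t) - m by rewrite Hv1 sq_step.
  have Hall : forall i, sqnorm (restr (G i) (v t)) <= m.
    move=> i; case Hi: (i \in take t s).
      have [_ [_ I3]] := gs_inv G g (take t s).
      rewrite /sqnorm big1 ?sq_ge0 // => j _; rewrite /restr.
      by case: ifP => Hj; rewrite /v ?(I3 i j Hi Hj) expr2 mul0r.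
    have := Hgr t Ht' i (negbT Hi).
    rewrite -/(v t) (set_nth_default x0 i Ht') -/istar -/m.
    by rewrite ler_sqrt.
  have Hr : sqnorm (restr S (v t)) <= m *+ k.
    apply: le_trans (HrK _) _.
    apply: le_trans (_ : \sum_(i in K) m <= _).
      by apply: ler_sum => i _; apply: Hall.
    rewrite sumr_const -(mulr_natl m #|K|) -(mulr_natl m k); apply: ler_wpM2r => //.
    by rewrite ler_nat.
  have HC : sqnorm (restr (~: S) (v t)) <= C.
    rewrite /C /sqnorm; apply: ler_sum => j _; rewrite /restr.
    case: ifP => _ //.
    by have [_ [I2 _]] := gs_inv G g (take t s); apply: I2.
  have Hx : sqnorm (v t) - C <= sqnorm (restr S (v t)).
    rewrite (sq_split (v t) S); lra.
  have IH' := IH (ltnW Ht).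
  rewrite Hq1 exprSr.
  set x := sqnorm (v t) - C.
  have hcy : 0 <= c * (c ^+ t * A) by apply: mulr_ge0 => //; apply: mulr_ge0 => //; apply: exprn_ge0.
  case: (lerP x 0) => Hx0.
    have -> : sqnorm (v t) - m - C = x - m by rewrite /x; ring.
    rewrite -mulrA mulrC -mulrA; lra.
  have h1 : x / k%:R <= m.
    by rewrite ler_pdivrMr // mulr_natr; apply: le_trans Hx Hr.
  have h2 : c * x <= c * (c ^+ t * A) by apply: ler_wpM2l.
  have h3 : x - x / k%:R = c * x by rewrite /c; ring.
  have -> : sqnorm (v t) - m - C = x - m by rewrite /x; ring.
  rewrite -mulrA mulrC -mulrA; lra.
have Hout : sqnorm (fun j => greedy_output G g s j - g j) = sqnorm (v n).
  rewrite /v /n take_size /greedy_output /sqnorm; apply: eq_bigr => j _.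
  have [I1 _] := gs_inv G g s.
  by rewrite -(I1 j); ring.
have HCu : C <= sqnorm (fun j => ustar j - g j).
  rewrite /C /sqnorm; apply: ler_sum => j _; rewrite /restr inE.
  case jS: (j \in S) => /=.
    by rewrite expr2 mul0r sqr_ge0.
  move/negbT: jS; rewrite inE negbK => /eqP ->.
  by rewrite sub0r sqrrN.
have Hexp0 : 0 <= expR (- (kt%:R / k%:R)) * A by apply: mulr_ge0 => //; apply: expR_ge0.
rewrite Hout.
case: (leqP kt M) => hM.
- have hn : n = kt by rewrite /n Hsize; apply/minn_idPl.
  have := HD n (leqnn n); rewrite hn => H1.
  have hcexp : c ^+ kt <= expR (- (kt%:R / k%:R)).
    have -> : - (kt%:R / k%:R) = (- k%:R^-1) * kt%:R :> R by ring.
    rewrite expRM_natr; apply: lerXn2r => //; rewrite ?nnegrE ?expR_ge0 //.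
    rewrite /c; exact: expR_ge1Dx.
  have := ler_wpM2r HA hcexp; lra.
- have hn : n = M by rewrite /n Hsize; apply/minn_idPr; apply: ltnW.
  have Hsel : forall i, i \in s.
    move=> i; apply/negPn/negP => Hi.
    have : uniq (i :: s) by rewrite /= Hi Huniq.
    move/card_uniqP; rewrite /= -/n hn => Hc.
    by have := max_card (mem (i :: s)); rewrite Hc card_ord ltnn.
  have -> : sqnorm (v n) = 0.
    rewrite /sqnorm big1 // => j _.
    have : j \in \bigcup_(i < M) G i by rewrite Hcov inE.
    case/bigcupP => i _ Hj.
    have [_ [_ I3]] := gs_inv G g (take n s).
    by rewrite /v (I3 i j) ?expr2 ?mul0r // /n take_size.
  have := sq_ge0 (fun j => ustar j - g j); lra.
Qed.
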